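(* Let $P$ be an orthogonal polygon without holes and let $S$ be a maximal square of $P$ with side length $d$ such that: the top and bottom sides of $S$ overlap with horizontal edges $e_1$ and $e_2$ of $P$ respectively; $e_1$ contains the top-right corner of $S$; $e_2$ contains the bottom-right corner of $S$; and there is a strip $Y$ between $e_1$ and $e_2$ whose right side is at distance more than $d$ from the right side of $S$. Let $S'$ be the reflection of $S$ in its right side. Then for every partial solution $\mathcal{R}$ with $S\in\mathcal{R}$ and such that no rec-pack of $\mathcal{R}$ overlaps $S'$, the set $\mathcal{R}\cup\{S'\}$ is also a partial solution.
   Context: $P$ is a simple polygon with integer vertex coordinates and axis-parallel edges. A valid square is an axis-parallel square contained in $P$; it is maximal if no larger-area valid square contains it. A strip of $P$ is a maximal axis-parallel non-square rectangular region lying inside $P$ such that each of its two longer sides is completely contained in an edge of $P$. A rec-pack is an axis-parallel rectangle contained in $P$ of dimensions $t\times \eta t$ or $\eta t\times t$ with $\eta\in\mathbb{N}$ (every valid square is a rec-pack); its extraction $\mathsf{ext}(R)$ is the set of the $\eta$ side-$t$ squares tiling $R$. A set $\mathcal{R}'$ of rec-packs is a minimum covering of $P$ if $\bigcup_{R\in\mathcal{R}'}\mathsf{ext}(R)$ is a minimum-cardinality set of valid squares with union $P$ and distinct rec-packs have disjoint extractions. A partial solution is a set of rec-packs contained in some minimum covering. *)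

(* Defs.v *)
From Stdlib Require Import Reals ZArith List Arith Lra Lia.
Open Scope R_scope.

(* An orthogonal polygon is given by its cyclic list of vertices (integer
   coordinates). Edge k joins vertex k and vertex (k+1) mod n. *)
Definition vtx (V : list (Z * Z)) (k : nat) : Z * Z := nth k V (0%Z, 0%Z).
Definition nxt (V : list (Z * Z)) (k : nat) : nat := ((k + 1) mod length V)%nat.

Definition edge_horizontal (V : list (Z * Z)) (k : nat) : Prop :=
  snd (vtx V k) = snd (vtx V (nxt V k)) /\ fst (vtx V k) <> fst (vtx V (nxt V k)).
Definition edge_vertical (V : list (Z * Z)) (k : nat) : Prop :=
  fst (vtx V k) = fst (vtx V (nxt V k)) /\ snd (vtx V k) <> snd (vtx V (nxt V k)).

Definition pt := (R * R)%type.
Definition ptZ (a : Z * Z) : pt := (IZR (fst a), IZR (snd a)).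

Definition on_edge (V : list (Z * Z)) (k : nat) (p : pt) : Prop :=
  let a := ptZ (vtx V k) in let b := ptZ (vtx V (nxt V k)) in
  Rmin (fst a) (fst b) <= fst p <= Rmax (fst a) (fst b) /\
  Rmin (snd a) (snd b) <= snd p <= Rmax (snd a) (snd b).

(* simple orthogonal polygon (hence without holes): every edge is
   axis-parallel of positive length, consecutive edges alternate between
   horizontal and vertical, and two distinct edges meet only when they are
   consecutive, and then only at their common vertex. *)
Definition ortho_polygon (V : list (Z * Z)) : Prop :=
  (4 <= length V)%nat /\
  (forall k, (k < length V)%nat -> edge_horizontal V k \/ edge_vertical V k) /\
  (forall k, (k < length V)%nat -> (edge_horizontal V k <-> edge_vertical V (nxt V k))) /\
  (forall i j p, (i < length V)%nat -> (j < length V)%nat -> i <> j ->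
     on_edge V i p -> on_edge V j p ->
     (j = nxt V i /\ p = ptZ (vtx V j)) \/ (i = nxt V j /\ p = ptZ (vtx V i))).

(* The unit cell [i,i+1]x[j,j+1] lies inside the polygon iff the horizontal
   ray from its centre to the right crosses an odd number of vertical edges. *)
Definition crossings (V : list (Z * Z)) (i j : Z) : nat :=
  length (filter (fun k =>
    let a := vtx V k in let b := vtx V (nxt V k) in
    (Z.eqb (fst a) (fst b) && Z.ltb i (fst a) &&
     Z.leb (Z.min (snd a) (snd b)) j && Z.ltb j (Z.max (snd a) (snd b)))%bool)
    (seq 0 (length V))).
Definition cell_in (V : list (Z * Z)) (i j : Z) : Prop := Nat.odd (crossings V i j) = true.

Definition inP (V : list (Z * Z)) (p : pt) : Prop :=
  exists i j : Z, cell_in V i j /\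
    IZR i <= fst p <= IZR (i + 1) /\ IZR j <= snd p <= IZR (j + 1).

Record rect := Rect { rx1 : R; ry1 : R; rx2 : R; ry2 : R }.
Definition width (r : rect) := rx2 r - rx1 r.
Definition height (r : rect) := ry2 r - ry1 r.
Definition nondeg (r : rect) : Prop := rx1 r < rx2 r /\ ry1 r < ry2 r.
Definition in_rect (r : rect) (p : pt) : Prop :=
  rx1 r <= fst p <= rx2 r /\ ry1 r <= snd p <= ry2 r.
Definition rect_sub (r s : rect) : Prop := forall p, in_rect r p -> in_rect s p.
Definition rect_in_P (V : list (Z * Z)) (r : rect) : Prop :=
  nondeg r /\ forall p, in_rect r p -> inP V p.
(* two rectangles overlap: their interiors intersect *)
Definition overlap (r s : rect) : Prop :=
  Rmax (rx1 r) (rx1 s) < Rmin (rx2 r) (rx2 s) /\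
  Rmax (ry1 r) (ry1 s) < Rmin (ry2 r) (ry2 s).

Definition is_square (r : rect) : Prop := width r = height r.
Definition valid_square (V : list (Z * Z)) (s : rect) : Prop :=
  rect_in_P V s /\ is_square s.
Definition maximal_square (V : list (Z * Z)) (s : rect) : Prop :=
  valid_square V s /\
  forall t, valid_square V t -> rect_sub s t -> width t * height t <= width s * height s.

Definition top_side_in_edge (V : list (Z * Z)) (r : rect) (k : nat) : Prop :=
  forall x, rx1 r <= x <= rx2 r -> on_edge V k (x, ry2 r).
Definition bottom_side_in_edge (V : list (Z * Z)) (r : rect) (k : nat) : Prop :=
  forall x, rx1 r <= x <= rx2 r -> on_edge V k (x, ry1 r).
Definition left_side_in_edge (V : list (Z * Z)) (r : rect) (k : nat) : Prop :=
  forall y, ry1 r <= y <= ry2 r -> on_edge V k (rx1 r, y).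
Definition right_side_in_edge (V : list (Z * Z)) (r : rect) (k : nat) : Prop :=
  forall y, ry1 r <= y <= ry2 r -> on_edge V k (rx2 r, y).

Definition longer_sides_on_edges (V : list (Z * Z)) (r : rect) : Prop :=
  (height r < width r ->
     (exists k, (k < length V)%nat /\ top_side_in_edge V r k) /\
     (exists k, (k < length V)%nat /\ bottom_side_in_edge V r k)) /\
  (width r < height r ->
     (exists k, (k < length V)%nat /\ left_side_in_edge V r k) /\
     (exists k, (k < length V)%nat /\ right_side_in_edge V r k)).

Definition strip_cand (V : list (Z * Z)) (r : rect) : Prop :=
  rect_in_P V r /\ ~ is_square r /\ longer_sides_on_edges V r.
Definition is_strip (V : list (Z * Z)) (y : rect) : Prop :=
  strip_cand V y /\ forall z, strip_cand V z -> rect_sub y z -> z = y.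
Definition strip_between (V : list (Z * Z)) (y : rect) (k1 k2 : nat) : Prop :=
  is_strip V y /\ height y < width y /\
  top_side_in_edge V y k1 /\ bottom_side_in_edge V y k2.

Definition rec_pack (V : list (Z * Z)) (r : rect) : Prop :=
  rect_in_P V r /\
  exists (t : R) (eta : nat), 0 < t /\ (1 <= eta)%nat /\
    ((width r = t /\ height r = INR eta * t) \/ (width r = INR eta * t /\ height r = t)).

(* q belongs to ext(r): one of the eta side-t squares tiling r *)
Definition in_ext (r q : rect) : Prop :=
  (width r <= height r /\ rx1 q = rx1 r /\ rx2 q = rx2 r /\
     exists k : nat, ry1 q = ry1 r + INR k * width r /\
       ry2 q = ry1 q + width r /\ ry2 q <= ry2 r) \/
  (height r <= width r /\ ry1 q = ry1 r /\ ry2 q = ry2 r /\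
     exists k : nat, rx1 q = rx1 r + INR k * height r /\
       rx2 q = rx1 q + height r /\ rx2 q <= rx2 r).

Definition square_cover (V : list (Z * Z)) (C : list rect) : Prop :=
  NoDup C /\ (forall q, In q C -> valid_square V q) /\
  (forall p, inP V p -> exists q, In q C /\ in_rect q p).

Definition min_covering (V : list (Z * Z)) (Rs : list rect) : Prop :=
  NoDup Rs /\ (forall r, In r Rs -> rec_pack V r) /\
  (forall r1 r2 q, In r1 Rs -> In r2 Rs -> r1 <> r2 -> in_ext r1 q -> in_ext r2 q -> False) /\
  exists L : list rect,
    (forall q, In q L <-> exists r, In r Rs /\ in_ext r q) /\
    square_cover V L /\
    forall C, square_cover V C -> (length L <= length C)%nat.

Definition partial_solution (V : list (Z * Z)) (Rs : list rect) : Prop :=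
  exists Rs', min_covering V Rs' /\ incl Rs Rs'.

Definition reflect_right (s : rect) : rect :=
  Rect (rx2 s) (ry1 s) (rx2 s + width s) (ry2 s).

(* Main.v *)
Require Import Defs.
From Stdlib Require Import Reals ZArith List Lra Lia Arith Bool ClassicalEpsilon.
Open Scope R_scope.

Lemma IZR_lt_succ (a b : Z) : IZR a < IZR b + 1 -> (a <= b)%Z.
Proof.
  intro H. assert (H1 : IZR a < IZR (b + 1)) by (rewrite plus_IZR; exact H).
  apply lt_IZR in H1. lia.
Qed.

Lemma IZR_lt_Z (a b : Z) : IZR a < IZR b -> (a < b)%Z.
Proof. apply lt_IZR. Qed.

Lemma IZR_le_Z (a b : Z) : IZR a <= IZR b -> (a <= b)%Z.
Proof. apply le_IZR. Qed.

Lemma Rmin_IZR (a b : Z) : Rmin (IZR a) (IZR b) = IZR (Z.min a b).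
Proof.
  destruct (Z.le_ge_cases a b) as [H|H].
  - rewrite Z.min_l by exact H. apply Rmin_left. apply IZR_le; exact H.
  - rewrite Z.min_r by lia. apply Rmin_right. apply IZR_le; lia.
Qed.

Lemma Rmax_IZR (a b : Z) : Rmax (IZR a) (IZR b) = IZR (Z.max a b).
Proof.
  destruct (Z.le_ge_cases a b) as [H|H].
  - rewrite Z.max_r by exact H. apply Rmax_right. apply IZR_le; exact H.
  - rewrite Z.max_l by lia. apply Rmax_left. apply IZR_le; lia.
Qed.

Lemma floorR (x : R) : exists z : Z, IZR z <= x < IZR z + 1.
Proof.
  destruct (archimed x) as [H1 H2]. exists (up x - 1)%Z.
  rewrite minus_IZR. simpl. lra.
Qed.

Lemma half_not_int (z i : Z) : IZR z <> IZR i + / 2.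
Proof.
  intro H. assert (H1 : IZR i < IZR z) by lra.
  assert (H2 : IZR z < IZR i + 1) by lra.
  apply lt_IZR in H1. apply IZR_lt_succ in H2. lia.
Qed.

Lemma nonint_in (u v : R) : u < v -> exists x z, u < x < v /\ IZR z < x < IZR z + 1.
Proof.
  intro Huv. set (m := (u + v) / 2). destruct (floorR m) as [z Hz].
  destruct (Rle_lt_or_eq_dec (IZR z) m (proj1 Hz)) as [Hlt|Heq].
  - exists m, z. unfold m in *. lra.
  - exists (m + Rmin ((v - u) / 4) (/ 2)), z.
    assert (Hm1 : Rmin ((v - u) / 4) (/ 2) <= (v - u) / 4) by apply Rmin_l.
    assert (Hm2 : Rmin ((v - u) / 4) (/ 2) <= / 2) by apply Rmin_r.
    assert (Hm3 : 0 < Rmin ((v - u) / 4) (/ 2)) by (apply Rmin_glb_lt; lra).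
    unfold m in *. lra.
Qed.

Lemma cell_of_point V (x y : R) (i j : Z) :
  inP V (x, y) -> IZR i < x < IZR i + 1 -> IZR j < y < IZR j + 1 -> cell_in V i j.
Proof.
  intros [i' [j' [Hc [Hx Hy]]]] Hi Hj. simpl in Hx, Hy.
  rewrite plus_IZR in Hx, Hy.
  assert (i' = i).
  { assert (i' <= i)%Z by (apply IZR_lt_succ; lra).
    assert (i <= i')%Z by (apply IZR_lt_succ; lra). lia. }
  assert (j' = j).
  { assert (j' <= j)%Z by (apply IZR_lt_succ; lra).
    assert (j <= j')%Z by (apply IZR_lt_succ; lra). lia. }
  subst; exact Hc.
Qed.

Lemma on_edge_iff V k x y :
  on_edge V k (x, y) <->
  (IZR (Z.min (fst (vtx V k)) (fst (vtx V (nxt V k)))) <= x <=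
     IZR (Z.max (fst (vtx V k)) (fst (vtx V (nxt V k)))) /\
   IZR (Z.min (snd (vtx V k)) (snd (vtx V (nxt V k)))) <= y <=
     IZR (Z.max (snd (vtx V k)) (snd (vtx V (nxt V k))))).
Proof.
  unfold on_edge, ptZ. simpl. rewrite !Rmin_IZR, !Rmax_IZR. tauto.
Qed.

Fixpoint par (f : nat -> bool) (l : list nat) : bool :=
  match l with nil => false | k :: l' => xorb (f k) (par f l') end.

Lemma odd_filter f l : Nat.odd (length (filter f l)) = par f l.
Proof.
  induction l as [|a l IH]; simpl; [reflexivity|].
  destruct (f a); simpl.
  - rewrite Nat.odd_succ, <- Nat.negb_odd, IH. reflexivity.
  - rewrite IH. reflexivity.
Qed.

Lemma par_xor f g l : par (fun k => xorb (f k) (g k)) l = xorb (par f l) (par g l).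
Proof.
  induction l as [|a l IH]; simpl; [reflexivity|]. rewrite IH.
  destruct (f a), (g a), (par f l), (par g l); reflexivity.
Qed.

Lemma par_ext_in f g l : (forall k, In k l -> f k = g k) -> par f l = par g l.
Proof.
  induction l as [|a l IH]; simpl; intros H; [reflexivity|].
  rewrite H by auto. rewrite IH by auto. reflexivity.
Qed.

Lemma par_false f l : (forall k, In k l -> f k = false) -> par f l = false.
Proof.
  induction l as [|a l IH]; simpl; intros H; [reflexivity|].
  rewrite H by auto. rewrite IH by auto. reflexivity.
Qed.

Lemma par_single f l k0 : NoDup l -> In k0 l -> f k0 = true ->
  (forall k, In k l -> f k = true -> k = k0) -> par f l = true.
Proof.
  induction l as [|a l IH]; simpl; intros Hnd Hin Hf Hu; [contradiction|].
  apply NoDup_cons_iff in Hnd as [Hna Hnd'].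
  destruct Hin as [->|Hin].
  - rewrite Hf. rewrite par_false; [reflexivity|].
    intros k Hk. destruct (f k) eqn:E; [|reflexivity].
    exfalso. assert (k = k0) by (apply Hu; auto). subst. contradiction.
  - destruct (f a) eqn:E.
    + exfalso. assert (a = k0) by (apply Hu; auto). subst. contradiction.
    + simpl. apply IH; auto.
Qed.

Lemma par_app f l1 l2 : par f (l1 ++ l2) = xorb (par f l1) (par f l2).
Proof.
  induction l1 as [|a l IH]; simpl; [reflexivity|]. rewrite IH.
  destruct (f a), (par f l), (par f l2); reflexivity.
Qed.

Lemma par_shift g s m : par (fun k => g (S k)) (seq s m) = par g (seq (S s) m).
Proof.
  revert s; induction m as [|m IH]; intros s; simpl; [reflexivity|].
  rewrite IH. reflexivity.
Qed.

Lemma par_nxt V g : (1 <= length V)%nat ->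
  par (fun k => g (nxt V k)) (seq 0 (length V)) = par g (seq 0 (length V)).
Proof.
  intros Hn. destruct (length V) as [|m] eqn:E; [lia|].
  unfold nxt. rewrite E.
  transitivity (xorb (par g (seq 1 m)) (g 0%nat)).
  - rewrite seq_S, par_app.
    rewrite (par_ext_in (fun k => g ((k + 1) mod S m)) (fun k => g (S k))).
    + rewrite par_shift.
      assert (H0 : ((0 + m + 1) mod S m = 0)%nat).
      { replace (0 + m + 1)%nat with (S m) by lia. rewrite Nat.mod_same; lia. }
      cbn [par]. rewrite H0. destruct (g 0%nat), (par g (seq 1 m)); reflexivity.
    + intros k Hk. apply in_seq in Hk. rewrite Nat.mod_small by lia.
      f_equal; lia.
  - cbn [seq par]. destruct (g 0%nat), (par g (seq 1 m)); reflexivity.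
Qed.

Ltac zdes := repeat match goal with
  | |- context [Z.eqb ?a ?b] => destruct (Z.eqb_spec a b)
  | |- context [Z.ltb ?a ?b] => destruct (Z.ltb_spec a b)
  | |- context [Z.leb ?a ?b] => destruct (Z.leb_spec a b) end;
  simpl; try reflexivity; exfalso; lia.

Lemma boolV (x x' y y' c j : Z) :
  ((x =? x') && (c - 1 <? x) && (Z.min y y' <=? j) && (j <? Z.max y y'))%Z%bool =
  xorb ((x =? x') && (c <? x) && (Z.min y y' <=? j) && (j <? Z.max y y'))%Z%bool
       ((x =? x') && (x =? c) && (Z.min y y' <=? j) && (j <? Z.max y y'))%Z%bool.
Proof.
  destruct (Z.eqb_spec x x'); simpl; [|reflexivity].
  destruct (Z.leb_spec (Z.min y y') j); simpl; [|rewrite !andb_false_r; reflexivity].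
  destruct (Z.ltb_spec j (Z.max y y')); simpl; [|rewrite !andb_false_r; reflexivity].
  rewrite !andb_true_r. zdes.
Qed.

Lemma boolH1 (x x' y y' i h : Z) :
  xorb ((x =? x') && (i <? x) && (Z.min y y' <=? h - 1) && (h - 1 <? Z.max y y'))%Z%bool
       ((x =? x') && (i <? x) && (Z.min y y' <=? h) && (h <? Z.max y y'))%Z%bool =
  ((x =? x') && xorb ((i <? x) && (y =? h)) ((i <? x') && (y' =? h)))%Z%bool.
Proof.
  destruct (Z.eqb_spec x x'); simpl; [|reflexivity]. subst x'.
  destruct (Z.ltb_spec i x); simpl; [|reflexivity].
  zdes.
Qed.

Lemma boolH2 (x x' y i h : Z) :
  (xorb ((i <? x) && (y =? h)) ((i <? x') && (y =? h)))%Z%bool =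
  ((y =? h) && (y =? h) && (Z.min x x' <=? i) && (i <? Z.max x x'))%Z%bool.
Proof.
  destruct (Z.eqb_spec y h); simpl; [|rewrite ?andb_false_r; reflexivity].
  rewrite !andb_true_r. zdes.
Qed.

Definition cf V (i j : Z) (k : nat) : bool :=
  let a := vtx V k in let b := vtx V (nxt V k) in
    (Z.eqb (fst a) (fst b) && Z.ltb i (fst a) &&
     Z.leb (Z.min (snd a) (snd b)) j && Z.ltb j (Z.max (snd a) (snd b)))%bool.

Lemma cell_in_par V i j : cell_in V i j <-> par (cf V i j) (seq 0 (length V)) = true.
Proof. unfold cell_in, crossings. rewrite odd_filter. reflexivity. Qed.

Lemma two_edges_vertex V i j p : ortho_polygon V -> (i < length V)%nat -> (j < length V)%nat ->
  i <> j -> on_edge V i p -> on_edge V j p -> exists v, p = ptZ (vtx V v).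
Proof.
  intros (_ & _ & _ & H4) Hi Hj Hij H1 H2.
  destruct (H4 i j p Hi Hj Hij H1 H2) as [[_ ->]|[_ ->]]; eauto.
Qed.

Lemma on_edge_vhalf V k c j :
  fst (vtx V k) = c -> fst (vtx V (nxt V k)) = c ->
  (Z.min (snd (vtx V k)) (snd (vtx V (nxt V k))) <= j)%Z ->
  (j < Z.max (snd (vtx V k)) (snd (vtx V (nxt V k))))%Z ->
  on_edge V k (IZR c, IZR j + / 2).
Proof.
  intros Hx Hx' Hj1 Hj2. apply on_edge_iff. rewrite Hx, Hx', Z.min_id, Z.max_id.
  split; [lra|].
  apply IZR_le in Hj1. assert (Hj3 : (j + 1 <= Z.max (snd (vtx V k)) (snd (vtx V (nxt V k))))%Z) by lia.
  apply IZR_le in Hj3. rewrite plus_IZR in Hj3. lra.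
Qed.

Lemma on_edge_hhalf V k h i :
  snd (vtx V k) = h -> snd (vtx V (nxt V k)) = h ->
  (Z.min (fst (vtx V k)) (fst (vtx V (nxt V k))) <= i)%Z ->
  (i < Z.max (fst (vtx V k)) (fst (vtx V (nxt V k))))%Z ->
  on_edge V k (IZR i + / 2, IZR h).
Proof.
  intros Hx Hx' Hj1 Hj2. apply on_edge_iff. rewrite Hx, Hx', Z.min_id, Z.max_id.
  split; [|lra].
  apply IZR_le in Hj1. assert (Hj3 : (i + 1 <= Z.max (fst (vtx V k)) (fst (vtx V (nxt V k))))%Z) by lia.
  apply IZR_le in Hj3. rewrite plus_IZR in Hj3. lra.
Qed.

Lemma flipV V k0 c j : ortho_polygon V -> (k0 < length V)%nat ->
  fst (vtx V k0) = c -> fst (vtx V (nxt V k0)) = c ->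
  (Z.min (snd (vtx V k0)) (snd (vtx V (nxt V k0))) <= j)%Z ->
  (j < Z.max (snd (vtx V k0)) (snd (vtx V (nxt V k0))))%Z ->
  cell_in V (c - 1) j -> cell_in V c j -> False.
Proof.
  intros Hpol Hk0 Hx Hx' Hj1 Hj2 H1 H2. apply cell_in_par in H1, H2.
  set (l := seq 0 (length V)) in *.
  set (h := fun k => ((fst (vtx V k) =? fst (vtx V (nxt V k))) && (fst (vtx V k) =? c) &&
     (Z.min (snd (vtx V k)) (snd (vtx V (nxt V k))) <=? j) &&
     (j <? Z.max (snd (vtx V k)) (snd (vtx V (nxt V k)))))%Z%bool).
  assert (E : par (cf V (c - 1) j) l = xorb (par (cf V c j) l) (par h l)).
  { rewrite <- par_xor. apply par_ext_in. intros k _. unfold cf, h. apply boolV. }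
  assert (Hh : par h l = true).
  { apply par_single with k0.
    - apply seq_NoDup.
    - apply in_seq. lia.
    - unfold h. rewrite Hx, Hx', Z.eqb_refl. simpl.
      apply andb_true_intro; split; [apply Z.leb_le|apply Z.ltb_lt]; rewrite <- ?Hx, <- ?Hx'; lia.
    - intros k Hk Hhk. apply in_seq in Hk.
      destruct (Nat.eq_dec k k0) as [|Hne]; [assumption|exfalso].
      unfold h in Hhk. apply andb_prop in Hhk as [Hhk Hb4]. apply andb_prop in Hhk as [Hhk Hb3].
      apply andb_prop in Hhk as [Hb1 Hb2].
      apply Z.eqb_eq in Hb1. apply Z.eqb_eq in Hb2. apply Z.leb_le in Hb3. apply Z.ltb_lt in Hb4.
      assert (O1 : on_edge V k (IZR c, IZR j + / 2)) by (apply on_edge_vhalf; try assumption; congruence).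
      assert (O2 : on_edge V k0 (IZR c, IZR j + / 2)) by (apply on_edge_vhalf; try assumption; congruence).
      destruct (two_edges_vertex V k k0 _ Hpol ltac:(lia) ltac:(lia) Hne O1 O2) as [v Hv].
      unfold ptZ in Hv. injection Hv as _ Hv. symmetry in Hv. exact (half_not_int _ _ Hv). }
  rewrite E, H2, Hh in H1. discriminate.
Qed.

Lemma poly_len V : ortho_polygon V -> (1 <= length V)%nat.
Proof. intros [H _]. lia. Qed.

Lemma flipH V k0 h i : ortho_polygon V -> (k0 < length V)%nat ->
  snd (vtx V k0) = h -> snd (vtx V (nxt V k0)) = h ->
  (Z.min (fst (vtx V k0)) (fst (vtx V (nxt V k0))) <= i)%Z ->
  (i < Z.max (fst (vtx V k0)) (fst (vtx V (nxt V k0))))%Z ->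
  cell_in V i (h - 1) -> cell_in V i h -> False.
Proof.
  intros Hpol Hk0 Hy Hy' Hi1 Hi2 H1 H2. apply cell_in_par in H1, H2.
  set (l := seq 0 (length V)) in *.
  set (vt := fun k => (fst (vtx V k) =? fst (vtx V (nxt V k)))%Z).
  set (g := fun v => ((i <? fst (vtx V v)) && (snd (vtx V v) =? h))%Z%bool).
  set (cov := fun k => ((snd (vtx V k) =? h) && (snd (vtx V (nxt V k)) =? h) &&
     (Z.min (fst (vtx V k)) (fst (vtx V (nxt V k))) <=? i) &&
     (i <? Z.max (fst (vtx V k)) (fst (vtx V (nxt V k)))))%Z%bool).
  assert (E1 : xorb (par (cf V i (h - 1)) l) (par (cf V i h) l) =
               par (fun k => vt k && xorb (g k) (g (nxt V k))) l).
  { rewrite <- par_xor. apply par_ext_in. intros k _. unfold cf, vt, g. apply boolH1. }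
  assert (E2 : par (fun k => xorb (g k) (g (nxt V k))) l = false).
  { rewrite par_xor. unfold l. rewrite (par_nxt V g (poly_len V Hpol)).
    apply xorb_nilpotent. }
  assert (E3 : par (fun k => xorb (g k) (g (nxt V k))) l =
     xorb (par (fun k => vt k && xorb (g k) (g (nxt V k))) l)
          (par (fun k => negb (vt k) && xorb (g k) (g (nxt V k))) l)).
  { rewrite <- par_xor. apply par_ext_in. intros k _. destruct (vt k); simpl;
    destruct (xorb (g k) (g (nxt V k))); reflexivity. }
  assert (E4 : par (fun k => negb (vt k) && xorb (g k) (g (nxt V k))) l =
               par (fun k => negb (vt k) && cov k) l).
  { apply par_ext_in. intros k Hk. apply in_seq in Hk.
    destruct (vt k) eqn:Ev; simpl; [reflexivity|].
    destruct Hpol as (_ & H2' & _). destruct (H2' k ltac:(lia)) as [[Hh _]|[Hv _]].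
    - unfold g, cov. rewrite <- Hh. apply boolH2.
    - unfold vt in Ev. rewrite Hv, Z.eqb_refl in Ev. discriminate. }
  assert (E5 : par (fun k => negb (vt k) && cov k) l = true).
  { apply par_single with k0.
    - apply seq_NoDup.
    - apply in_seq. lia.
    - unfold vt, cov. rewrite Hy, Hy', Z.eqb_refl. simpl.
      destruct (Z.eqb_spec (fst (vtx V k0)) (fst (vtx V (nxt V k0)))) as [e|]; simpl.
      + rewrite e, Z.min_id, Z.max_id in *. lia.
      + apply andb_true_intro; split; [apply Z.leb_le|apply Z.ltb_lt]; lia.
    - intros k Hk Hhk. apply in_seq in Hk.
      destruct (Nat.eq_dec k k0) as [|Hne]; [assumption|exfalso].
      apply andb_prop in Hhk as [_ Hhk]. unfold cov in Hhk.
      apply andb_prop in Hhk as [Hhk Hb4]. apply andb_prop in Hhk as [Hhk Hb3].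
      apply andb_prop in Hhk as [Hb1 Hb2].
      apply Z.eqb_eq in Hb1. apply Z.eqb_eq in Hb2. apply Z.leb_le in Hb3. apply Z.ltb_lt in Hb4.
      assert (O1 : on_edge V k (IZR i + / 2, IZR h)) by (apply on_edge_hhalf; try assumption; congruence).
      assert (O2 : on_edge V k0 (IZR i + / 2, IZR h)) by (apply on_edge_hhalf; try assumption; congruence).
      destruct (two_edges_vertex V k k0 _ Hpol ltac:(lia) ltac:(lia) Hne O1 O2) as [v Hv].
      unfold ptZ in Hv. injection Hv as Hv _. symmetry in Hv. exact (half_not_int _ _ Hv). }
  rewrite H1, H2 in E1. rewrite E3, E4, E5 in E2. rewrite <- E1 in E2. discriminate.
Qed.

Definition X V k := fst (vtx V k).
Definition Yv V k := snd (vtx V k).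

Definition Ctx V (a B aL bR : R) (Y1 Y2 : Z) (k1 k2 : nat) : Prop :=
  ortho_polygon V /\ (k1 < length V)%nat /\ (k2 < length V)%nat /\
  Yv V k1 = Y2 /\ Yv V (nxt V k1) = Y2 /\ Yv V k2 = Y1 /\ Yv V (nxt V k2) = Y1 /\
  IZR (Z.min (X V k1) (X V (nxt V k1))) < a /\ B < IZR (Z.max (X V k1) (X V (nxt V k1))) /\
  IZR (Z.min (X V k2) (X V (nxt V k2))) < a /\ B < IZR (Z.max (X V k2) (X V (nxt V k2))) /\
  (Y1 < Y2)%Z /\ aL < a /\ a <= B /\ B < bR /\
  (forall x y, aL < x < a -> IZR Y1 <= y <= IZR Y2 -> inP V (x, y)) /\
  (forall x y, B < x < bR -> IZR Y1 <= y <= IZR Y2 -> inP V (x, y)).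

Lemma VT V kk H a B k c :
  ortho_polygon V -> (kk < length V)%nat -> (k < length V)%nat ->
  Yv V kk = H -> Yv V (nxt V kk) = H ->
  IZR (Z.min (X V kk) (X V (nxt V kk))) < a -> B < IZR (Z.max (X V kk) (X V (nxt V kk))) ->
  X V k = c -> X V (nxt V k) = c -> a <= IZR c <= B ->
  (Z.min (Yv V k) (Yv V (nxt V k)) <= H <= Z.max (Yv V k) (Yv V (nxt V k)))%Z -> False.
Proof.
  unfold X, Yv. intros Hpol Hkk Hk Hy Hy' Hmin Hmax Hx Hx' Hc HH.
  assert (Hlt1 : (Z.min (fst (vtx V kk)) (fst (vtx V (nxt V kk))) < c)%Z) by (apply lt_IZR; lra).
  assert (Hlt2 : (c < Z.max (fst (vtx V kk)) (fst (vtx V (nxt V kk))))%Z) by (apply lt_IZR; lra).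
  assert (O1 : on_edge V k (IZR c, IZR H)).
  { apply on_edge_iff. rewrite Hx, Hx', Z.min_id, Z.max_id. split; [lra|].
    split; apply IZR_le; lia. }
  assert (O2 : on_edge V kk (IZR c, IZR H)).
  { apply on_edge_iff. rewrite Hy, Hy', Z.min_id, Z.max_id. split; [|lra].
    split; apply IZR_le; lia. }
  assert (Hne : k <> kk).
  { intro E; subst kk. rewrite Hx, Hx' in Hlt1. rewrite Z.min_id in Hlt1. lia. }
  destruct Hpol as (_ & _ & _ & H4).
  destruct (H4 k kk _ Hk Hkk Hne O1 O2) as [[E Hp]|[E Hp]].
  - unfold ptZ in Hp. injection Hp as Hp _. apply eq_IZR in Hp. lia.
  - unfold ptZ in Hp. injection Hp as Hp _. apply eq_IZR in Hp. subst k.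
    rewrite Hx in Hp. lia.
Qed.

(* a horizontal edge cannot cross a region of P *)
Lemma Hexit V k h u v :
  ortho_polygon V -> (k < length V)%nat -> Yv V k = h -> Yv V (nxt V k) = h ->
  X V k <> X V (nxt V k) -> u < v -> IZR (Z.min (X V k) (X V (nxt V k))) < v -> u < IZR (Z.max (X V k) (X V (nxt V k))) ->
  (forall x, u < x < v -> inP V (x, IZR h - / 2) /\ inP V (x, IZR h + / 2)) -> False.
Proof.
  unfold X, Yv. intros Hpol Hk Hy Hy' Hxne Huv Hv Hu Hreg.
  assert (Hlt : Rmax u (IZR (Z.min (fst (vtx V k)) (fst (vtx V (nxt V k))))) <
                Rmin v (IZR (Z.max (fst (vtx V k)) (fst (vtx V (nxt V k)))))).
  { assert (IZR (Z.min (fst (vtx V k)) (fst (vtx V (nxt V k)))) <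
            IZR (Z.max (fst (vtx V k)) (fst (vtx V (nxt V k))))) by (apply IZR_lt; lia).
    unfold Rmax, Rmin. destruct Rle_dec; destruct Rle_dec; lra. }
  destruct (nonint_in _ _ Hlt) as [x [z [Hx Hz]]].
  assert (M1 := Rmax_l u (IZR (Z.min (fst (vtx V k)) (fst (vtx V (nxt V k)))))).
  assert (M2 := Rmax_r u (IZR (Z.min (fst (vtx V k)) (fst (vtx V (nxt V k)))))).
  assert (M3 := Rmin_l v (IZR (Z.max (fst (vtx V k)) (fst (vtx V (nxt V k)))))).
  assert (M4 := Rmin_r v (IZR (Z.max (fst (vtx V k)) (fst (vtx V (nxt V k)))))).
  destruct (Hreg x ltac:(lra)) as [P1 P2].
  apply (flipH V k h z Hpol Hk Hy Hy').
  - apply IZR_lt_succ. lra.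
  - apply lt_IZR. lra.
  - apply (cell_of_point V x (IZR h - / 2)); [exact P1|lra|].
    rewrite minus_IZR. simpl. lra.
  - apply (cell_of_point V x (IZR h + / 2)); [exact P2|lra|lra].
Qed.

Definition inside V (a B : R) (Y1 Y2 : Z) (k : nat) : Prop :=
  a <= IZR (X V k) <= B /\ (Y1 < Yv V k < Y2)%Z /\
  a <= IZR (X V (nxt V k)) <= B /\ (Y1 < Yv V (nxt V k) < Y2)%Z.

Lemma nxt_lt V k : (1 <= length V)%nat -> (nxt V k < length V)%nat.
Proof. intros H. unfold nxt. apply Nat.mod_upper_bound. lia. Qed.

Lemma inside_step V a B aL bR Y1 Y2 k1 k2 k :
  Ctx V a B aL bR Y1 Y2 k1 k2 -> (k < length V)%nat ->
  inside V a B Y1 Y2 k -> inside V a B Y1 Y2 (nxt V k).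
Proof.
  intros HC Hk Hin.
  destruct HC as (Hpol & Hk1 & Hk2 & Ha1 & Ha1' & Ha2 & Ha2' & Hm1 & HM1 & Hm2 & HM2 &
                  HY12 & HaL & HaB & HBb & HS & HY).
  destruct Hin as (_ & _ & Hvx & Hvy).
  set (k' := nxt V k) in *.
  assert (Hk' : (k' < length V)%nat) by (apply nxt_lt; apply poly_len; exact Hpol).
  split; [exact Hvx|split; [exact Hvy|]].
  destruct Hpol as (Hl4 & H2 & H3 & H4).
  destruct (H2 k' Hk') as [[Hh Hhx]|[Hv Hvy']].
  -
    fold (Yv V k') (Yv V (nxt V k')) in Hh. fold (X V k') (X V (nxt V k')) in Hhx.
    split.
    + destruct (Rlt_le_dec (IZR (X V (nxt V k'))) a) as [Hlt|Hge1].
      * exfalso. apply (Hexit V k' (Yv V k') aL a); auto.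
        -- split; auto.
        -- assert (IZR (Z.min (X V k') (X V (nxt V k'))) <= IZR (X V (nxt V k'))) by (apply IZR_le; lia). lra.
        -- assert (IZR (X V k') <= IZR (Z.max (X V k') (X V (nxt V k')))) by (apply IZR_le; lia). lra.
        -- intros x Hx. assert (IZR Y1 + 1 <= IZR (Yv V k')).
           { rewrite <- plus_IZR. apply IZR_le. lia. }
           assert (IZR (Yv V k') + 1 <= IZR Y2).
           { rewrite <- plus_IZR. apply IZR_le. lia. }
           split; apply HS; lra.
      * destruct (Rle_lt_dec (IZR (X V (nxt V k'))) B) as [Hle|Hgt]; [lra|].
        exfalso. apply (Hexit V k' (Yv V k') B bR); auto.
        -- split; auto.
        -- assert (IZR (Z.min (X V k') (X V (nxt V k'))) <= IZR (X V k')) by (apply IZR_le; lia). lra.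
        -- assert (IZR (X V (nxt V k')) <= IZR (Z.max (X V k') (X V (nxt V k')))) by (apply IZR_le; lia). lra.
        -- intros x Hx. assert (IZR Y1 + 1 <= IZR (Yv V k')).
           { rewrite <- plus_IZR. apply IZR_le. lia. }
           assert (IZR (Yv V k') + 1 <= IZR Y2).
           { rewrite <- plus_IZR. apply IZR_le. lia. }
           split; apply HY; lra.
    + unfold Yv in *. rewrite <- Hh. exact Hvy.
  - fold (X V k') (X V (nxt V k')) in Hv. fold (Yv V k') (Yv V (nxt V k')) in Hvy'.
    split; [rewrite <- Hv; exact Hvx|].
    destruct (Z_lt_le_dec (Yv V (nxt V k')) Y2) as [Hlt2|Hge2].
    + destruct (Z_lt_le_dec Y1 (Yv V (nxt V k'))) as [Hlt1|Hge1]; [lia|].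
      exfalso. apply (VT V k2 Y1 a B k' (X V k')); auto.
      * split; auto.
      * lia.
    + exfalso. apply (VT V k1 Y2 a B k' (X V k')); auto.
      * split; auto.
      * lia.
Qed.

Lemma inside_iter V a B aL bR Y1 Y2 k1 k2 k0 :
  Ctx V a B aL bR Y1 Y2 k1 k2 -> (k0 < length V)%nat -> inside V a B Y1 Y2 k0 ->
  forall m, inside V a B Y1 Y2 ((k0 + m) mod length V).
Proof.
  intros HC Hk0 Hin.
  assert (Hn : (1 <= length V)%nat) by (apply poly_len; exact (proj1 HC)).
  induction m as [|m IH].
  - rewrite Nat.add_0_r, Nat.mod_small by lia. exact Hin.
  - replace ((k0 + S m) mod length V)%nat with (nxt V ((k0 + m) mod length V)).
    + apply (inside_step V a B aL bR Y1 Y2 k1 k2); auto. apply Nat.mod_upper_bound; lia.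
    + unfold nxt. rewrite Nat.add_mod_idemp_l by lia. f_equal; lia.
Qed.

Lemma no_window_edge V a B aL bR Y1 Y2 k1 k2 k0 c j :
  Ctx V a B aL bR Y1 Y2 k1 k2 -> (k0 < length V)%nat ->
  X V k0 = c -> X V (nxt V k0) = c -> a <= IZR c <= B ->
  (Z.min (Yv V k0) (Yv V (nxt V k0)) <= j < Z.max (Yv V k0) (Yv V (nxt V k0)))%Z ->
  (Y1 <= j < Y2)%Z -> False.
Proof.
  intros HC Hk0 Hx Hx' Hc Hj HjY.
  pose proof HC as HC'.
  destruct HC' as (Hpol & Hk1 & Hk2 & Ha1 & Ha1' & Ha2 & Ha2' & Hm1 & HM1 & Hm2 & HM2 &
                  HY12 & HaL & HaB & HBb & HS & HY).
  destruct (Z_lt_le_dec (Z.max (Yv V k0) (Yv V (nxt V k0))) Y2) as [H1|H1].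
  2:{ apply (VT V k1 Y2 a B k0 c); auto. lia. }
  destruct (Z_lt_le_dec Y1 (Z.min (Yv V k0) (Yv V (nxt V k0)))) as [H2|H2].
  2:{ apply (VT V k2 Y1 a B k0 c); auto. lia. }
  assert (Hin : inside V a B Y1 Y2 k0).
  { unfold inside. rewrite Hx, Hx'. repeat split; try lra; lia. }
  pose proof (inside_iter V a B aL bR Y1 Y2 k1 k2 k0 HC Hk0 Hin (length V - k0 + k1)) as Hit.
  replace ((k0 + (length V - k0 + k1)) mod length V)%nat with k1 in Hit.
  - destruct Hit as (_ & Hk1y & _). lia.
  - replace (k0 + (length V - k0 + k1))%nat with (k1 + 1 * length V)%nat by lia.
    rewrite Nat.mod_add by lia. rewrite Nat.mod_small by lia. reflexivity.
Qed.

Lemma gap V a B aL bR Y1 Y2 k1 k2 x y :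
  Ctx V a B aL bR Y1 Y2 k1 k2 -> a <= x <= B -> IZR Y1 <= y <= IZR Y2 -> inP V (x, y).
Proof.
  intros HC Hx Hy.
  pose proof HC as HC'.
  destruct HC' as (Hpol & Hk1 & Hk2 & Ha1 & Ha1' & Ha2 & Ha2' & Hm1 & HM1 & Hm2 & HM2 &
                  HY12 & HaL & HaB & HBb & HS & HY).
  destruct (floorR x) as [i Hi]. destruct (floorR y) as [j0 Hj0].
  destruct (floorR B) as [fl Hfl].
  set (j := Z.min j0 (Y2 - 1)).
  assert (HjY : (Y1 <= j < Y2)%Z).
  { assert (Y1 <= j0)%Z by (apply IZR_lt_succ; lra). unfold j. lia. }
  assert (Hjy : IZR j <= y <= IZR j + 1).
  { unfold j. destruct (Z.le_ge_cases j0 (Y2 - 1)) as [Hc|Hc].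
    - rewrite Z.min_l by exact Hc. lra.
    - rewrite Z.min_r by exact Hc. apply IZR_le in Hc. rewrite minus_IZR in *. simpl in *. lra. }
  set (xq := (B + Rmin bR (IZR fl + 1)) / 2).
  assert (Hxq : B < xq < bR /\ IZR fl < xq < IZR fl + 1).
  { assert (M1 := Rmin_l bR (IZR fl + 1)). assert (M2 := Rmin_r bR (IZR fl + 1)).
    assert (B < Rmin bR (IZR fl + 1)) by (apply Rmin_glb_lt; lra).
    unfold xq. lra. }
  assert (Href : cell_in V fl j).
  { apply (cell_of_point V xq (IZR j + / 2)); [|lra|lra].
    apply HY; [lra|]. assert (IZR j + 1 <= IZR Y2).
    { rewrite <- plus_IZR. apply IZR_le. lia. }
    assert (IZR Y1 <= IZR j) by (apply IZR_le; lia). lra. }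
  assert (Hifl : (i <= fl)%Z) by (apply IZR_lt_succ; lra).
  assert (Hcell : cell_in V i j).
  { apply cell_in_par. apply cell_in_par in Href. rewrite <- Href.
    apply par_ext_in. intros k Hk. apply in_seq in Hk. unfold cf.
    destruct (Z.eqb_spec (fst (vtx V k)) (fst (vtx V (nxt V k)))) as [Hv|]; simpl; [|reflexivity].
    destruct (Z.leb_spec (Z.min (snd (vtx V k)) (snd (vtx V (nxt V k)))) j); simpl;
      [|rewrite !andb_false_r; reflexivity].
    destruct (Z.ltb_spec j (Z.max (snd (vtx V k)) (snd (vtx V (nxt V k))))); simpl;
      [|rewrite !andb_false_r; reflexivity].
    rewrite !andb_true_r.
    destruct (Z.ltb_spec i (fst (vtx V k))); destruct (Z.ltb_spec fl (fst (vtx V k)));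
      try reflexivity; try lia.
    exfalso. apply (no_window_edge V a B aL bR Y1 Y2 k1 k2 k (fst (vtx V k)) j HC ltac:(lia));
      try reflexivity; unfold X, Yv; auto; try lia.
    split.
    + assert (IZR i + 1 <= IZR (fst (vtx V k))) by (rewrite <- plus_IZR; apply IZR_le; lia). lra.
    + assert (IZR (fst (vtx V k)) <= IZR fl) by (apply IZR_le; lia). lra. }
  exists i, j. split; [exact Hcell|]. simpl. rewrite !plus_IZR. lra.
Qed.

Lemma band V a B aL bR Y1 Y2 k1 k2 x y :
  Ctx V a B aL bR Y1 Y2 k1 k2 -> a <= x < bR -> IZR Y1 <= y <= IZR Y2 -> inP V (x, y).
Proof.
  intros HC Hx Hy. destruct (Rle_lt_dec x B).
  - apply (gap V a B aL bR Y1 Y2 k1 k2); auto. lra.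
  - destruct HC as (_ & _ & _ & _ & _ & _ & _ & _ & _ & _ & _ & _ & _ & _ & _ & _ & HY).
    apply HY; auto. lra.
Qed.

Lemma side_bound V a B aL bR Y1 Y2 k1 k2 (Q : rect) px py :
  Ctx V a B aL bR Y1 Y2 k1 k2 ->
  bR <= IZR (Z.max (X V k1) (X V (nxt V k1))) -> bR <= IZR (Z.max (X V k2) (X V (nxt V k2))) ->
  rect_in_P V Q -> a < px < bR -> in_rect Q (px, py) -> IZR Y1 < py < IZR Y2 ->
  IZR Y1 <= ry1 Q /\ ry2 Q <= IZR Y2.
Proof.
  intros HC HM1' HM2' [[HQx HQy] HQ] Hpx [Hqx Hqy] Hpy. simpl in Hqx, Hqy.
  pose proof HC as HC'.
  destruct HC' as (Hpol & Hk1 & Hk2 & Ha1 & Ha1' & Ha2 & Ha2' & Hm1 & HM1 & Hm2 & HM2 &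
                  HY12 & HaL & HaB & HBb & HS & HY).
  assert (Hlt : Rmax a (rx1 Q) < Rmin bR (rx2 Q)).
  { unfold Rmax, Rmin. destruct Rle_dec; destruct Rle_dec; lra. }
  destruct (nonint_in _ _ Hlt) as [x [z [Hx Hz]]].
  assert (M1 := Rmax_l a (rx1 Q)). assert (M2 := Rmax_r a (rx1 Q)).
  assert (M3 := Rmin_l bR (rx2 Q)). assert (M4 := Rmin_r bR (rx2 Q)).
  assert (HY12' : IZR Y1 + 1 <= IZR Y2) by (rewrite <- plus_IZR; apply IZR_le; lia).
  split.
  - destruct (Rle_lt_dec (IZR Y1) (ry1 Q)) as [|Hlo]; [assumption|exfalso].
    set (y' := IZR Y1 - Rmin (IZR Y1 - ry1 Q) 1 / 2).
    assert (N1 := Rmin_l (IZR Y1 - ry1 Q) 1). assert (N2 := Rmin_r (IZR Y1 - ry1 Q) 1).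
    assert (N3 : 0 < Rmin (IZR Y1 - ry1 Q) 1) by (apply Rmin_glb_lt; lra).
    assert (P1 : inP V (x, y')) by (apply HQ; unfold in_rect, y'; simpl; lra).
    assert (P2 : inP V (x, IZR Y1 + / 2)) by (apply (band V a B aL bR Y1 Y2 k1 k2); auto; lra).
    apply (flipH V k2 Y1 z Hpol Hk2 Ha2 Ha2').
    + apply IZR_lt_succ. fold (X V k2) (X V (nxt V k2)). lra.
    + apply lt_IZR. fold (X V k2) (X V (nxt V k2)). lra.
    + apply (cell_of_point V x y'); [exact P1|lra|]. rewrite minus_IZR. simpl. unfold y'. lra.
    + apply (cell_of_point V x (IZR Y1 + / 2)); [exact P2|lra|lra].
  - destruct (Rle_lt_dec (ry2 Q) (IZR Y2)) as [|Hhi]; [assumption|exfalso].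
    set (y' := IZR Y2 + Rmin (ry2 Q - IZR Y2) 1 / 2).
    assert (N1 := Rmin_l (ry2 Q - IZR Y2) 1). assert (N2 := Rmin_r (ry2 Q - IZR Y2) 1).
    assert (N3 : 0 < Rmin (ry2 Q - IZR Y2) 1) by (apply Rmin_glb_lt; lra).
    assert (P1 : inP V (x, y')) by (apply HQ; unfold in_rect, y'; simpl; lra).
    assert (P2 : inP V (x, IZR Y2 - / 2)) by (apply (band V a B aL bR Y1 Y2 k1 k2); auto; lra).
    apply (flipH V k1 Y2 z Hpol Hk1 Ha1 Ha1').
    + apply IZR_lt_succ. fold (X V k1) (X V (nxt V k1)). lra.
    + apply lt_IZR. fold (X V k1) (X V (nxt V k1)). lra.
    + apply (cell_of_point V x (IZR Y2 - / 2)); [exact P2|lra|]. rewrite minus_IZR. simpl. lra.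
    + apply (cell_of_point V x y'); [exact P1|lra|]. unfold y'. lra.
Qed.

Definition dec (P : Prop) : bool := if excluded_middle_informative P then true else false.
Lemma decT (P : Prop) : dec P = true <-> P.
Proof. unfold dec. destruct (excluded_middle_informative P); split; intros; auto; discriminate. Qed.

Lemma max_lt_min a b c d : Rmax a b < Rmin c d <-> (a < c /\ a < d /\ b < c /\ b < d).
Proof. unfold Rmax, Rmin. destruct Rle_dec; destruct Rle_dec; split; intros; lra. Qed.

Lemma overlap_iff r s : overlap r s <->
  (rx1 r < rx2 r /\ rx1 r < rx2 s /\ rx1 s < rx2 r /\ rx1 s < rx2 s) /\
  (ry1 r < ry2 r /\ ry1 r < ry2 s /\ ry1 s < ry2 r /\ ry1 s < ry2 s).
Proof. unfold overlap. rewrite !max_lt_min. tauto. Qed.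

Lemma overlap_self s : nondeg s -> overlap s s.
Proof. intros [H1 H2]. apply overlap_iff. lra. Qed.

Lemma ext_bounds r q : nondeg r -> in_ext r q ->
  rx1 r <= rx1 q /\ rx2 q <= rx2 r /\ ry1 r <= ry1 q /\ ry2 q <= ry2 r /\ nondeg q.
Proof.
  intros [Hw Hh] [(Hwh & E1 & E2 & k & E3 & E4 & E5)|(Hwh & E1 & E2 & k & E3 & E4 & E5)];
  unfold width, height in *; assert (Hk := pos_INR k).
  - assert (0 <= INR k * (rx2 r - rx1 r)) by (apply Rmult_le_pos; lra).
    unfold nondeg. lra.
  - assert (0 <= INR k * (ry2 r - ry1 r)) by (apply Rmult_le_pos; lra).
    unfold nondeg. lra.
Qed.

Lemma overlap_ext r q s : nondeg r -> in_ext r q -> overlap q s -> overlap r s.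
Proof.
  intros Hr He Ho. destruct (ext_bounds r q Hr He) as (B1 & B2 & B3 & B4 & _).
  apply overlap_iff in Ho. apply overlap_iff. destruct Hr. lra.
Qed.

Lemma ext_self V q : valid_square V q -> in_ext q q.
Proof.
  intros [[[Hw Hh] _] Hsq]. unfold is_square, width, height in *. left.
  unfold width, height. split; [lra|]. split; [reflexivity|]. split; [reflexivity|].
  exists 0%nat. simpl. split; [lra|]. split; lra.
Qed.

Lemma rect_eq (r q : rect) : rx1 r = rx1 q -> ry1 r = ry1 q -> rx2 r = rx2 q -> ry2 r = ry2 q -> r = q.
Proof. destruct r, q; simpl; intros; subst; reflexivity. Qed.

Lemma ext_square V q q' : valid_square V q -> in_ext q q' -> q' = q.
Proof.
  intros [[[Hw Hh] _] Hsq] He. unfold is_square, width, height in *.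
  destruct He as [(Hwh & E1 & E2 & k & E3 & E4 & E5)|(Hwh & E1 & E2 & k & E3 & E4 & E5)];
  unfold width, height in *; assert (Hk := pos_INR k).
  - assert (0 <= INR k * (rx2 q - rx1 q)) by (apply Rmult_le_pos; lra).
    apply rect_eq; lra.
  - assert (0 <= INR k * (ry2 q - ry1 q)) by (apply Rmult_le_pos; lra).
    apply rect_eq; lra.
Qed.

Lemma valid_rec_pack V q : valid_square V q -> rec_pack V q.
Proof.
  intros [Hq Hsq]. split; [exact Hq|]. destruct Hq as [[Hw Hh] _].
  exists (width q), 1%nat. unfold is_square, width, height in *. simpl.
  split; [lra|]. split; [lia|]. left. split; lra.
Qed.

Lemma filter_length_lt {A} (f : A -> bool) l x : In x l -> f x = false ->
  (length (filter f l) < length l)%nat.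
Proof.
  induction l as [|a l IH]; simpl; [tauto|]. intros [->|Hin] Hf.
  - rewrite Hf. pose proof (filter_length_le f l). lia.
  - destruct (f a); simpl; specialize (IH Hin Hf); [lia|].
    pose proof (filter_length_le f l). lia.
Qed.

Lemma exchange V (Rs Rs' L : list rect) (S S' Q : rect) :
  NoDup Rs' -> (forall r, In r Rs' -> rec_pack V r) ->
  (forall r1 r2 q, In r1 Rs' -> In r2 Rs' -> r1 <> r2 -> in_ext r1 q -> in_ext r2 q -> False) ->
  (forall q, In q L <-> exists r, In r Rs' /\ in_ext r q) ->
  square_cover V L -> (forall C, square_cover V C -> (length L <= length C)%nat) ->
  incl Rs Rs' -> In S Rs -> valid_square V S ->
  valid_square V S' -> (forall r, In r Rs -> ~ overlap r S') ->
  In Q L -> overlap Q S' -> Q <> S -> S <> S' ->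
  (forall p, in_rect Q p -> in_rect S p \/ in_rect S' p) ->
  partial_solution V (S' :: Rs).
Proof.
  intros HND Hrp Hdis HL [HLnd [HLv HLc]] HLmin Hincl HS HSv HS'v Hno HQ HQo HQS HSS' HQsub.
  assert (HS'nd : nondeg S') by (destruct HS'v as [[H _] _]; exact H).
  assert (Hrpnd : forall r, In r Rs' -> nondeg r) by (intros r Hr; destruct (Hrp r Hr) as [[H _] _]; exact H).
  set (A := filter (fun r => dec (In r Rs)) Rs').
  set (Bl := filter (fun q => dec (q <> Q /\ q <> S' /\ ~ (exists r, In r Rs /\ in_ext r q))) L).
  set (C := filter (fun q => dec (q <> Q /\ q <> S')) L).
  assert (InA : forall r, In r A <-> In r Rs).
  { intro r. unfold A. rewrite filter_In, decT. split; [tauto|]. intro H; split; auto. }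
  assert (InB : forall q, In q Bl <-> In q L /\ q <> Q /\ q <> S' /\ ~ (exists r, In r Rs /\ in_ext r q)).
  { intro q. unfold Bl. rewrite filter_In, decT. tauto. }
  assert (InC : forall q, In q C <-> In q L /\ q <> Q /\ q <> S').
  { intro q. unfold C. rewrite filter_In, decT. tauto. }
  assert (HAext : forall r q, In r Rs -> in_ext r q -> overlap q S' -> False).
  { intros r q Hr He Ho. apply (Hno r Hr). apply (overlap_ext r q); auto. }
  exists (S' :: A ++ Bl). split.
  2:{ intros r [<-|Hr]; [left; reflexivity|right]. apply in_or_app. left. apply InA. exact Hr. }
  split; [|split; [|split]].
  -
    constructor.
    + intro H. apply in_app_or in H as [H|H].
      * apply InA in H. apply (Hno S' H). apply overlap_self; auto.
      * apply InB in H. tauto.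
    + apply NoDup_app; [apply NoDup_filter; auto|apply NoDup_filter; auto|].
      intros r Ha Hb. apply InA in Ha. apply InB in Hb as (HbL & _ & _ & Hn).
      apply Hn. exists r. split; auto. apply (ext_self V). apply HLv; auto.
  -
    intros r [<-|Hr]; [apply valid_rec_pack; auto|].
    apply in_app_or in Hr as [Hr|Hr].
    + apply Hrp. apply InA in Hr. auto.
    + apply InB in Hr. apply valid_rec_pack. apply HLv. tauto.
  -
    assert (Hone : forall r1 r2 q, r1 = S' \/ In r1 A \/ In r1 Bl ->
                   r2 = S' \/ In r2 A \/ In r2 Bl -> r1 <> r2 -> in_ext r1 q -> in_ext r2 q ->
                   (r1 = S' \/ In r1 Bl) -> False).
    { intros r1 r2 q H1 H2 Hne E1 E2 H1'.
      assert (Hq : q = r1).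
      { destruct H1' as [->|H1'].
        - apply (ext_square V); auto.
        - apply InB in H1'. apply (ext_square V); auto. apply HLv. tauto. }
      subst q.
      destruct H2 as [->|[H2|H2]].
      - destruct H1' as [->|H1']; [contradiction|].
        apply InB in H1'. apply (ext_square V) in E2; [tauto|auto].
      - apply InA in H2. destruct H1' as [->|H1'].
        + apply (HAext r2 S'); auto. apply overlap_self; auto.
        + apply InB in H1' as (_ & _ & _ & Hn). apply Hn. eauto.
      - apply InB in H2 as (HL2 & _ & HS2 & _). apply (ext_square V) in E2; [|apply HLv; auto].
        auto. }
    intros r1 r2 q H1 H2 Hne E1 E2.
    assert (H1' : r1 = S' \/ In r1 A \/ In r1 Bl).
    { destruct H1 as [<-|H1]; [auto|]. apply in_app_or in H1. tauto. }
    assert (H2' : r2 = S' \/ In r2 A \/ In r2 Bl).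
    { destruct H2 as [<-|H2]; [auto|]. apply in_app_or in H2. tauto. }
    destruct H1' as [E|[HA1|HB1]].
    + apply (Hone r1 r2 q); auto.
    + destruct H2' as [E|[HA2|HB2]].
      * apply (Hone r2 r1 q); auto.
      * apply InA in HA1, HA2. apply (Hdis r1 r2 q); auto.
      * apply (Hone r2 r1 q); auto.
    + apply (Hone r1 r2 q); auto.
  - exists (S' :: C). split; [|split].
    + intro q. split.
      * intros [<-|Hq].
        -- exists S'. split; [left; auto|]. apply (ext_self V); auto.
        -- apply InC in Hq as (HqL & HqQ & HqS').
           destruct (classic (exists r0, In r0 Rs /\ in_ext r0 q)) as [[r0 [Hr0 He0]]|Hn].
           ++ exists r0. split; [right; apply in_or_app; left; apply InA; auto|auto].
           ++ exists q. split.
              ** right. apply in_or_app. right. apply InB. auto.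
              ** apply (ext_self V). apply HLv. auto.
      * intros [r [Hr He]]. destruct Hr as [<-|Hr].
        -- left. symmetry. apply (ext_square V); auto.
        -- right. apply in_app_or in Hr as [Hr|Hr].
           ++ apply InA in Hr. apply InC. split; [apply HL; exists r; auto|].
              split; intro E; subst q.
              ** apply (HAext r Q); auto.
              ** apply (HAext r S'); auto. apply overlap_self; auto.
           ++ apply InB in Hr as (HrL & HrQ & HrS & _).
              apply (ext_square V) in He; [|apply HLv; auto]. subst q. apply InC. auto.
    + split; [|split].
      * constructor; [intro H; apply InC in H; tauto|apply NoDup_filter; auto].
      * intros q [<-|Hq]; [auto|]. apply InC in Hq. apply HLv. tauto.
      * intros p Hp. destruct (HLc p Hp) as [q [HqL Hpq]].
        destruct (classic (q = Q)) as [->|HqQ].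
        -- destruct (HQsub p Hpq) as [HpS|HpS'].
           ++ exists S. split; [|auto]. right. apply InC. split; [|split; auto].
              apply HL. exists S. split; [apply Hincl; auto|apply (ext_self V); auto].
           ++ exists S'. split; [left; auto|auto].
        -- destruct (classic (q = S')) as [->|HqS'].
           ++ exists S'. split; [left; auto|auto].
           ++ exists q. split; auto. right. apply InC. auto.
    + intros C0 HC0. specialize (HLmin C0 HC0). simpl.
      assert (length C < length L)%nat.
      { apply (filter_length_lt (fun q => dec (q <> Q /\ q <> S')) L Q); auto.
        apply Bool.not_true_is_false. intro HE. apply (proj1 (decT _)) in HE.
        apply (proj1 HE). reflexivity. }
      lia.
Qed.

Fixpoint epsf (a : R) (L : list rect) (e : R) : R :=
  match L with
  | nil => e
  | q :: L' => if Rlt_dec a (rx1 q) then Rmin (rx1 q - a) (epsf a L' e) else epsf a L' e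
  end.

Lemma epsf_spec a L e : 0 < e ->
  0 < epsf a L e /\ epsf a L e <= e /\
  (forall q, In q L -> a < rx1 q -> epsf a L e <= rx1 q - a).
Proof.
  intros He. induction L as [|q L IH]; simpl.
  - split; [lra|]. split; [lra|]. tauto.
  - destruct IH as (I1 & I2 & I3). destruct (Rlt_dec a (rx1 q)) as [Hq|Hq].
    + assert (M1 := Rmin_l (rx1 q - a) (epsf a L e)). assert (M2 := Rmin_r (rx1 q - a) (epsf a L e)).
      split; [apply Rmin_glb_lt; lra|]. split; [lra|].
      intros q' [<-|Hq'] Ha; [lra|]. specialize (I3 q' Hq' Ha). lra.
    + split; [lra|]. split; [lra|].
      intros q' [<-|Hq'] Ha; [lra|]. auto.
Qed.

Theorem lemma4p12 (V : list (Z * Z)) (S : rect) (d : R) (k1 k2 : nat) (Y : rect) :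
  ortho_polygon V ->
  maximal_square V S -> width S = d ->
  (k1 < length V)%nat -> (k2 < length V)%nat ->
  edge_horizontal V k1 -> edge_horizontal V k2 ->
  (* top side of S overlaps e1 (positive-length overlap), bottom side overlaps e2 *)
  IZR (snd (vtx V k1)) = ry2 S ->
  Rmax (rx1 S) (IZR (Z.min (fst (vtx V k1)) (fst (vtx V (nxt V k1))))) <
    Rmin (rx2 S) (IZR (Z.max (fst (vtx V k1)) (fst (vtx V (nxt V k1))))) ->
  IZR (snd (vtx V k2)) = ry1 S ->
  Rmax (rx1 S) (IZR (Z.min (fst (vtx V k2)) (fst (vtx V (nxt V k2))))) <
    Rmin (rx2 S) (IZR (Z.max (fst (vtx V k2)) (fst (vtx V (nxt V k2))))) ->
  on_edge V k1 (rx2 S, ry2 S) ->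
  on_edge V k2 (rx2 S, ry1 S) ->
  strip_between V Y k1 k2 ->
  rx2 Y - rx2 S > d ->
  forall Rs : list rect,
    partial_solution V Rs -> In S Rs ->
    (forall r, In r Rs -> ~ overlap r (reflect_right S)) ->
    partial_solution V (reflect_right S :: Rs).
Proof.
  intros Hpol HmaxS Hd Hk1 Hk2 Hh1 Hh2 Hy1 Hov1 Hy2 Hov2 _ _ HYs HYd Rs Hps HSin Hnoov.
  assert (HSv : valid_square V S) by (exact (proj1 HmaxS)).
  pose proof HSv as [[[HSx HSy] HSP] HSsq].
  unfold is_square, width, height in HSsq. unfold width in Hd.
  destruct HYs as [[[[[HYx HYy] HYP] _] _] [_ [HYtop HYbot]]].
  set (a := rx2 S) in *. assert (Hae : a = rx2 S) by reflexivity.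
  set (Y2 := snd (vtx V k1)) in *. set (Y1 := snd (vtx V k2)) in *.
  assert (HY2e : IZR Y2 = IZR (snd (vtx V k1))) by reflexivity.
  assert (HY1e : IZR Y1 = IZR (snd (vtx V k2))) by reflexivity.
  destruct Hh1 as [Hh1y Hh1x]. destruct Hh2 as [Hh2y Hh2x].
  apply max_lt_min in Hov1. apply max_lt_min in Hov2.
  assert (T1 := HYtop (rx2 Y) ltac:(lra)). apply on_edge_iff in T1.
  assert (T2 := HYbot (rx2 Y) ltac:(lra)). apply on_edge_iff in T2.
  fold Y2 in T1. rewrite <- Hh1y, Z.min_id, Z.max_id in T1.
  fold Y1 in T2. rewrite <- Hh2y, Z.min_id, Z.max_id in T2.
  fold Y2 in T1. fold Y1 in T2. assert (HY2 : ry2 Y = IZR Y2) by lra. assert (HY1 : ry1 Y = IZR Y1) by lra.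
  assert (HY12 : (Y1 < Y2)%Z) by (apply lt_IZR; lra).
  set (B := Rmax a ((rx1 Y + rx2 Y) / 2)).
  assert (HB1 := Rmax_l a ((rx1 Y + rx2 Y) / 2)). assert (HB2 := Rmax_r a ((rx1 Y + rx2 Y) / 2)). fold B in HB1, HB2. assert (HBe : B = Rmax a ((rx1 Y + rx2 Y) / 2)) by reflexivity.
  assert (HBlt : B < rx2 Y).
  { unfold B, Rmax. destruct Rle_dec; lra. }
  assert (HC : Ctx V a B (rx1 S) (rx2 Y) Y1 Y2 k1 k2).
  { unfold Ctx, X, Yv. fold Y1 Y2.
    split; [exact Hpol|]. split; [exact Hk1|]. split; [exact Hk2|].
    split; [reflexivity|]. split; [symmetry; exact Hh1y|].
    split; [reflexivity|]. split; [symmetry; exact Hh2y|].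
    split; [lra|]. split; [lra|]. split; [lra|]. split; [lra|].
    split; [exact HY12|]. split; [lra|]. split; [lra|]. split; [lra|].
    split.
    - intros x y Hx Hy. apply HSP. unfold in_rect. simpl. lra.
    - intros x y Hx Hy. apply HYP. unfold in_rect. simpl. lra. }
  set (S' := reflect_right S).
  assert (HS'v : valid_square V S').
  { split; [split|].
    - unfold nondeg, S', reflect_right, width. simpl. lra.
    - intros [x y] [Hx Hy]. unfold S', reflect_right, width in Hx, Hy. simpl in Hx, Hy.
      apply (band V a B (rx1 S) (rx2 Y) Y1 Y2 k1 k2); auto; lra.
    - unfold is_square, S', reflect_right, width, height. simpl. lra. }
  destruct Hps as [Rs' [[HND [Hrp [Hdis [L [HL [HLcov HLmin]]]]]] Hincl]].
  pose proof HLcov as [HLnd [HLv HLc]].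
  destruct (epsf_spec a L d ltac:(lra)) as (E1 & E2 & E3).
  set (eps := epsf a L d) in *.
  set (px := a + eps / 2). set (py := (IZR Y1 + IZR Y2) / 2).
  assert (Hpxe : px = a + eps / 2) by reflexivity. assert (Hpye : py = (IZR Y1 + IZR Y2) / 2) by reflexivity.
  assert (HpP : inP V (px, py)).
  { apply (band V a B (rx1 S) (rx2 Y) Y1 Y2 k1 k2); auto; unfold px, py; lra. }
  destruct (HLc _ HpP) as [Q [HQ [HQx HQy]]]. simpl in HQx, HQy.
  pose proof (HLv Q HQ) as HQv. pose proof HQv as [[[HQx' HQy'] HQP] HQsq].
  unfold is_square, width, height in HQsq.
  assert (HQa : rx1 Q <= a).
  { destruct (Rle_lt_dec (rx1 Q) a) as [|Hlt]; [assumption|].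
    specialize (E3 Q HQ Hlt). unfold px in HQx. lra. }
  destruct (side_bound V a B (rx1 S) (rx2 Y) Y1 Y2 k1 k2 Q px py HC) as [HQ1 HQ2].
  - unfold X. lra.
  - unfold X. lra.
  - split; [split; lra|exact HQP].
  - unfold px. lra.
  - split; simpl; lra.
  - unfold py. lra.
  - apply (exchange V Rs Rs' L S S' Q); auto.
    + apply overlap_iff. unfold S', reflect_right, width. simpl. unfold px, py in *. lra.
    + intro E. subst Q. unfold px in HQx. lra.
    + intro E. assert (rx1 S = rx1 S') by (rewrite E; reflexivity).
      unfold S', reflect_right in H. simpl in H. lra.
    + intros [x y] [Hx Hy]. simpl in Hx, Hy. destruct (Rle_lt_dec x a).
      * left. split; simpl; unfold px in *; lra.
      * right. unfold S', reflect_right, width. split; simpl; unfold px in *; lra.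
Qed.
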